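(* Let $(A,\dashv,\vdash,\perp)$ be an associative trialgebra. Define $$[x,y]:=x\dashv y-y\vdash x\qquad\text{and}\qquad xy:=x\perp y.$$ Then the following hold. (i) The product $xy$ is associative. (ii) The bracket satisfies the (right) Leibniz identity $[[x,y],z]=[[x,z],y]+[x,[y,z]]$. (iii) For all $x,y,z\in A$, $$[xy,z]=x[y,z]+[x,z]y\qquad\text{and}\qquad [x,\,yz-zy]=[x,[y,z]].$$ That is, $(A,xy,[\,,\,])$ is a noncommutative Poisson algebra.
   Context: Let $K$ be a field. An associative trialgebra is a $K$-vector space $A$ with three bilinear operations $\dashv,\vdash,\perp$ satisfying for all $x,y,z\in A$ the following 11 relations: (1) $(x\dashv y)\dashv z=x\dashv(y\dashv z)$; (2) $(x\dashv y)\dashv z=x\dashv(y\vdash z)$; (3) $(x\vdash y)\dashv z=x\vdash(y\dashv z)$; (4) $(x\dashv y)\vdash z=x\vdash(y\vdash z)$; (5) $(x\vdash y)\vdash z=x\vdash(y\vdash z)$; (6) $(x\dashv y)\dashv z=x\dashv(y\perp z)$; (7) $(x\perp y)\dashv z=x\perp(y\dashv z)$; (8) $(x\dashv y)\perp z=x\perp(y\vdash z)$; (9) $(x\vdash y)\perp z=x\vdash(y\perp z)$; (10) $(x\perp y)\vdash z=x\vdash(y\vdash z)$; (11) $(x\perp y)\perp z=x\perp(y\perp z)$. *)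

(* Defs.v *)
From mathcomp Require Import all_boot all_algebra.
Set Implicit Arguments. Unset Strict Implicit. Unset Printing Implicit Defensive.
Import GRing.Theory.
Local Open Scope ring_scope.

Definition bilinear_op (K : fieldType) (A : lmodType K) (op : A -> A -> A) : Prop :=
  (forall (a : K) (x y z : A), op (a *: x + y) z = a *: op x z + op y z) /\
  (forall (a : K) (x y z : A), op x (a *: y + z) = a *: op x y + op x z).

(* Associative trialgebra: (A, dashv (left), vdash (right), perp (middle))
   satisfying the 11 relations of the paper. *)
Definition assoc_trialgebra (K : fieldType) (A : lmodType K)
  (l r m : A -> A -> A) : Prop :=
  bilinear_op l /\ bilinear_op r /\ bilinear_op m /\
  forall x y z : A,
  (    l (l x y) z = l x (l y z)  /\
      l (l x y) z = l x (r y z)  /\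
      l (r x y) z = r x (l y z)  /\
      r (l x y) z = r x (r y z)  /\
      r (r x y) z = r x (r y z)  /\
      l (l x y) z = l x (m y z)  /\
      l (m x y) z = m x (l y z)  /\
      m (l x y) z = m x (r y z)  /\
      m (r x y) z = r x (m y z)  /\
      r (m x y) z = r x (r y z)  /\
      m (m x y) z = m x (m y z)).

(* Main.v *)
Require Import Defs.
From mathcomp Require Import all_boot all_algebra.
Local Open Scope ring_scope.
Import GRing.Theory.

Lemma bil_l (K : fieldType) (A : lmodType K) (op : A -> A -> A) :
  bilinear_op op -> forall x y z, op (x - y) z = op x z - op y z.
Proof.
move=> [H1 _] x y z.
by have := H1 (-1) y x z; rewrite !scaleN1r addrC [- _ + _]addrC.
Qed.

Lemma bil_r (K : fieldType) (A : lmodType K) (op : A -> A -> A) :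
  bilinear_op op -> forall x y z, op x (y - z) = op x y - op x z.
Proof.
move=> [_ H1] x y z.
by have := H1 (-1) x z y; rewrite !scaleN1r addrC [- _ + _]addrC.
Qed.

Lemma z1 (V : zmodType) (a b c d e f : V) :
  a - b - (c - d) = e - c - (b - f) + (a - e - (f - d)).
Proof. by rewrite !opprB !addrA [RHS](@GRing.add V).[ACl ((1*6)*(3*8)*5*4*7*2)] !subrr !add0r. Qed.

Arguments bil_l {K A op}.
Arguments bil_r {K A op}.

Theorem proposition1p16 (K : fieldType) (A : lmodType K)
  (l r m : A -> A -> A) :
  assoc_trialgebra l r m ->
  let br := fun x y : A => l x y - r y x in
  (forall x y z : A, m (m x y) z = m x (m y z)) /\
  (forall x y z : A, br (br x y) z = br (br x z) y + br x (br y z)) /\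
  (forall x y z : A,
     br (m x y) z = m x (br y z) + m (br x z) y /\
     br x (m y z - m z y) = br x (br y z)).
Proof.
move=> [bl [br' [bm H]]] br.
split; first by move=> x y z; case: (H x y z) => [? [? [? [? [? [? [? [? [? [? ?]]]]]]]]]].
split.
  move=> x y z; rewrite /br !(bil_l bl) !(bil_r bl) !(bil_l br') !(bil_r br').
  case: (H x y z) => [h1 _]; case: (H x z y) => [_ [h2 _]].
  case: (H y x z) => [_ [_ [h3 _]]]; case: (H z x y) => [_ [_ [h3' _]]].
  case: (H z y x) => [_ [_ [_ [_ [h5 _]]]]]; case: (H y z x) => [_ [_ [_ [h4 _]]]].
  rewrite h1 -h2 h3 h3' h5 -h4.
  exact: z1.
move=> x y z; rewrite /br; split.
  rewrite !(bil_l bm) !(bil_r bm).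
  case: (H x y z) => [_ [_ [_ [_ [_ [_ [h7 _]]]]]]].
  case: (H x z y) => [_ [_ [_ [_ [_ [_ [_ [h8 _]]]]]]]].
  case: (H z x y) => [_ [_ [_ [_ [_ [_ [_ [_ [h9 _]]]]]]]]].
  by rewrite h7 -h8 h9 addrA subrK.
rewrite !(bil_r bl) !(bil_l br').
case: (H x y z) => [h1 [_ [_ [_ [_ [h6 _]]]]]].
case: (H x z y) => [_ [h2 [_ [_ [_ [h6' _]]]]]].
case: (H y z x) => [_ [_ [_ [h4 [_ [_ [_ [_ [_ [h10 _]]]]]]]]]].
case: (H z y x) => [_ [_ [_ [_ [h5 [_ [_ [_ [_ [h10' _]]]]]]]]]].
by rewrite -h6 h1 -h6' h2 h10 -h4 h10' -h5.
Qed.
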